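(* Let $p>0$, $d>0$, $\chi>0$ and $\delta>0$ be real parameters, and for $\lambda>0$ define $$c(\lambda)=\lambda+\frac{p}{\lambda}-\frac{2\chi}{\pi}\arctan\!\left(\frac{1}{\delta}\min\!\left(\lambda,\frac{1}{\sqrt{d}}\right)\right).$$ Set $$\Lambda=\left\{\frac{p-\delta^2+\frac{2\chi}{\pi}\delta+\sqrt{\left(p-\delta^2+\frac{2\chi}{\pi}\delta\right)^2+4\delta^2p}}{2}\right\}^{1/2}.$$ Then $$\min_{\lambda>0} c(\lambda)=\begin{cases} 2\sqrt{p}-\frac{2\chi}{\pi}\arctan\!\left(\frac{1}{\sqrt{d}\,\delta}\right), & \text{if } dp>1,\\[4pt] \frac{1}{\sqrt{d}}+p\sqrt{d}-\frac{2\chi}{\pi}\arctan\!\left(\frac{1}{\sqrt{d}\,\delta}\right), & \text{if } 1-\frac{2\chi}{\pi\left(\delta+\frac{1}{d\delta}\right)}<dp<1,\\[4pt] \Lambda+\frac{p}{\Lambda}-\frac{2\chi}{\pi}\arctan\!\left(\frac{\Lambda}{\delta}\right), & \text{if } dp\le 1-\frac{2\chi}{\pi\left(\delta+\frac{1}{d\delta}\right)}. \end{cases}$$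
   Context: The function $c(\lambda)$ is the dispersion relation between the propagation speed $c$ and the exponential decay rate $\lambda$ of the front (density $\propto e^{-\lambda(x-ct)}$ far ahead) for the one-dimensional flux-limited Keller–Segel equation $\partial_t\rho+\partial_x(U_\delta[\partial_x\log S]\rho)=\partial_{xx}\rho+P(\rho)\rho$, $-d\partial_{xx}S+S=\rho$, with growth rate $P(\rho)=p$ for $0\le\rho\le 1/(1+p)$, and with chemotactic flux function $U_\delta(X)=\frac{2\chi}{\pi}\arctan(X/\delta)$. Here $p$ is the proliferation rate at low density, $d$ the diffusion coefficient of the chemoattractant, $\chi$ the modulation amplitude and $\delta^{-1}$ the stiffness of the chemotactic response. *)

(* Defs.v *)
From Stdlib Require Import Reals.
Open Scope R_scope.

Definition cdisp (p d chi delta lam : R) : R :=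
  lam + p / lam - 2 * chi / PI * atan (/ delta * Rmin lam (/ sqrt d)).

Definition LambdaC (p chi delta : R) : R :=
  let A := p - delta ^ 2 + 2 * chi / PI * delta in
  sqrt ((A + sqrt (A ^ 2 + 4 * delta ^ 2 * p)) / 2).

Definition is_min_pos (f : R -> R) (m : R) : Prop :=
  (exists lam, 0 < lam /\ f lam = m) /\ (forall lam, 0 < lam -> m <= f lam).

(* Main.v *)
Require Import Defs.
From Stdlib Require Import Reals Lra.
From Coquelicot Require Import Coquelicot.
Open Scope R_scope.

Definition hf (p k de x : R) := x + p / x - k * atan (/ de * x).
Definition dhf (p k de x : R) := 1 - p / (x*x) - k * (/ de * / (1 + (/de * x)^2)).

Lemma hf_deriv p k de x : 0 < x -> 0 < de -> is_derive (hf p k de) x (dhf p k de x).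
Proof.
  intros Hx Hd. unfold hf, dhf.
  assert (E : is_derive (fun x => atan (/ de * x)) x (/ de * / (1 + (/de*x)²))).
  { apply (is_derive_comp atan (fun x => /de * x)).
    - apply is_derive_atan.
    - replace (/de) with (/de * 1) at 1 by ring. auto_derive. auto. ring. }
  apply (is_derive_minus (fun x => x + p/x)).
  - auto_derive. lra. field. lra.
  - replace (k * (/ de * / (1 + (/ de * x) ^ 2))) with (k * (/ de * / (1 + (/de*x)²))).
    2: unfold Rsqr; f_equal; f_equal; f_equal; ring.
    apply is_derive_scal. exact E.
Qed.

Section S.
Variables p k de : R.
Hypotheses (Hp : 0 < p) (Hk : 0 < k) (Hd : 0 < de).
Let A := p - de^2 + k*de.
Let r := sqrt (A^2 + 4*de^2*p).
Let L2 := (A + r)/2.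

Lemma r_facts : r * r = A^2 + 4*de^2*p /\ 0 <= r /\ A < r /\ -A < r.
Proof.
  assert (h1 : r * r = A^2 + 4*de^2*p) by (apply sqrt_sqrt; nra).
  assert (h2 : 0 <= r) by apply sqrt_pos.
  assert (0 < 4*de^2*p) by (apply Rmult_lt_0_compat; nra).
  repeat split; auto; nra.
Qed.

Lemma L2_pos : 0 < L2.
Proof. destruct r_facts as (?&?&?&?). unfold L2. lra. Qed.

Lemma g_fact x : x^4 - A*x^2 - p*de^2 = (x^2 - L2) * (x^2 - (A - r)/2).
Proof. destruct r_facts as (h1&_). unfold L2. nra. Qed.

Lemma dhf_eq x : 0 < x -> dhf p k de x * (x*x*(de*de + x*x)) = x^4 - A*x^2 - p*de^2.
Proof. intros Hx. unfold dhf, A. field. split; nra. Qed.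

Lemma dhf_neg x : 0 < x -> x*x <= L2 -> dhf p k de x <= 0.
Proof.
  intros Hx HL. destruct r_facts as (h1&h2&h3&h4).
  pose proof (dhf_eq x Hx). rewrite g_fact in H.
  assert (0 < x*x*(de*de+x*x)) by (apply Rmult_lt_0_compat; nra).
  assert ((x ^ 2 - L2) * (x ^ 2 - (A - r) / 2) <= 0) by (apply Rmult_le_0_r; nra).
  nra.
Qed.

Lemma dhf_pos x : 0 < x -> L2 <= x*x -> 0 <= dhf p k de x.
Proof.
  intros Hx HL. destruct r_facts as (h1&h2&h3&h4).
  pose proof (dhf_eq x Hx). rewrite g_fact in H.
  assert (0 < x*x*(de*de+x*x)) by (apply Rmult_lt_0_compat; nra).
  assert (0 <= (x ^ 2 - L2) * (x ^ 2 - (A - r) / 2)) by (apply Rmult_le_pos; nra).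
  nra.
Qed.

Lemma mvt x y : 0 < x <= y -> exists c, x <= c <= y /\ hf p k de y - hf p k de x = dhf p k de c * (y - x).
Proof.
  intros Hxy.
  destruct (MVT_gen (hf p k de) x y (dhf p k de)) as (c & Hc & E).
  - intros z Hz. rewrite Rmin_left in Hz by lra. rewrite Rmax_right in Hz by lra.
    apply hf_deriv; lra.
  - intros z Hz. rewrite Rmin_left in Hz by lra. rewrite Rmax_right in Hz by lra.
    apply continuity_pt_filterlim. apply (@ex_derive_continuous R_AbsRing R_NormedModule).
    eexists. apply hf_deriv; lra.
  - rewrite Rmin_left in Hc by lra. rewrite Rmax_right in Hc by lra.
    exists c; split; auto.
Qed.

Lemma hf_min x : 0 < x -> hf p k de (sqrt L2) <= hf p k de x.
Proof.
  intros Hx. pose proof L2_pos. set (L := sqrt L2).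
  assert (HL : L * L = L2) by (apply sqrt_sqrt; lra).
  assert (0 < L) by (apply sqrt_lt_R0; lra).
  destruct (Rle_dec x L).
  - destruct (mvt x L) as (c & Hc & E). lra.
    assert (dhf p k de c <= 0) by (apply dhf_neg; nra). nra.
  - destruct (mvt L x) as (c & Hc & E). lra.
    assert (0 <= dhf p k de c) by (apply dhf_pos; nra). nra.
Qed.

Lemma hf_decr x y : 0 < x <= y -> y * y <= L2 -> hf p k de y <= hf p k de x.
Proof.
  intros Hxy Hy. destruct (mvt x y) as (c & Hc & E). lra.
  assert (dhf p k de c <= 0) by (apply dhf_neg; nra). nra.
Qed.

Lemma L2_le mu : 0 < mu -> mu^2 - A*mu - p*de^2 <= 0 -> mu <= L2.
Proof.
  intros Hm Hg. destruct r_facts as (h1&h2&h3&h4).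
  assert (E : mu^2 - A*mu - p*de^2 = (mu - L2) * (mu - (A - r)/2)) by (unfold L2; nra).
  nra.
Qed.

Lemma L2_ge mu : 0 < mu -> 0 <= mu^2 - A*mu - p*de^2 -> L2 <= mu.
Proof.
  intros Hm Hg. destruct r_facts as (h1&h2&h3&h4).
  assert (E : mu^2 - A*mu - p*de^2 = (mu - L2) * (mu - (A - r)/2)) by (unfold L2; nra).
  nra.
Qed.
End S.

Lemma amgm p x : 0 < p -> 0 < x -> 2 * sqrt p <= x + p / x.
Proof.
  intros Hp Hx. pose proof (sqrt_sqrt p (Rlt_le _ _ Hp)). pose proof (sqrt_pos p).
  assert (x*(x + p/x) = x*x + p) by (field; lra).
  assert (0 <= (x - sqrt p)*(x - sqrt p)) by apply Rle_0_sqr.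
  assert (2*sqrt p * x <= x*x+p) by nra.
  apply (Rmult_le_reg_l x); nra.
Qed.

Lemma incr_part p s x : 0 < s <= x -> p <= s * s -> s + p / s <= x + p / x.
Proof.
  intros Hs Hps.
  assert (x + p/x - (s + p/s) = (x - s) * (x*s - p) / (x * s)) by (field; lra).
  assert (0 <= x*s - p) by nra.
  assert (0 <= (x - s) * (x*s - p) / (x * s)) by (apply Rdiv_le_0_compat; [apply Rmult_le_pos; lra | nra]). lra.
Qed.

Lemma atan_le x y : x <= y -> atan x <= atan y.
Proof. intros [H|H]. left; apply atan_increasing; auto. subst; lra. Qed.

Theorem mainTheorem1 (p d chi delta : R) :
  0 < p -> 0 < d -> 0 < chi -> 0 < delta ->
  let thr := 1 - 2 * chi / (PI * (delta + / (d * delta))) in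
  (d * p > 1 ->
     is_min_pos (cdisp p d chi delta)
       (2 * sqrt p - 2 * chi / PI * atan (/ (sqrt d * delta)))) /\
  (thr < d * p < 1 ->
     is_min_pos (cdisp p d chi delta)
       (/ sqrt d + p * sqrt d - 2 * chi / PI * atan (/ (sqrt d * delta)))) /\
  (d * p <= thr ->
     is_min_pos (cdisp p d chi delta)
       (LambdaC p chi delta + p / LambdaC p chi delta
        - 2 * chi / PI * atan (LambdaC p chi delta / delta))).
Proof.
  intros Hp Hd Hc Hde thr.
  pose proof PI_RGT_0 as HPI.
  assert (Hk : 0 < 2 * chi / PI) by (apply Rdiv_lt_0_compat; lra).
  set (k := 2 * chi / PI) in *.
  assert (Hsd : 0 < sqrt d) by (apply sqrt_lt_R0; lra).
  assert (Hsd2 : sqrt d * sqrt d = d) by (apply sqrt_sqrt; lra).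
  set (s := / sqrt d).
  assert (Hs : 0 < s) by (apply Rinv_0_lt_compat; lra).
  assert (Hss : s * s * d = 1) by (unfold s; rewrite <- Rinv_mult, Hsd2; field; lra).
  assert (Eat : / (sqrt d * delta) = / delta * s) by (unfold s; field; lra).
  rewrite Eat.
  assert (C1 : forall l, l <= s -> cdisp p d chi delta l = hf p k delta l).
  { intros l Hl. unfold cdisp, hf. fold s. rewrite Rmin_left by lra. reflexivity. }
  assert (C2 : forall l, s <= l -> cdisp p d chi delta l = l + p / l - k * atan (/delta * s)).
  { intros l Hl. unfold cdisp. fold s. rewrite Rmin_right by lra. reflexivity. }
  assert (C3 : forall l, 0 < l -> l + p / l - k * atan (/delta * s) <= cdisp p d chi delta l).
  { intros l Hl. unfold cdisp. fold s.
    assert (atan (/ delta * Rmin l s) <= atan (/delta * s)).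
    { apply atan_le. apply Rmult_le_compat_l. left; apply Rinv_0_lt_compat; lra. apply Rmin_r. }
    fold k. apply (Rmult_le_compat_l k) in H; lra. }
  assert (Ethr : thr = 1 - k * d * delta / (d * delta^2 + 1)).
  { unfold thr, k. field. repeat split; try lra. nra. }
  set (A := p - delta^2 + k*delta).
  assert (Eg : ((/d)^2 - A * (/d) - p * delta^2) * d^2 = (1 - d*p)*(1 + d*delta^2) - k*d*delta).
  { unfold A. field. lra. }
  assert (HLam : LambdaC p chi delta = sqrt ((A + sqrt (A^2 + 4*delta^2*p))/2)) by reflexivity.
  set (L2 := (A + sqrt (A^2 + 4*delta^2*p))/2) in HLam.
  assert (HL2 : 0 < L2) by (apply (L2_pos p k delta); auto).
  set (L := LambdaC p chi delta) in *.
  assert (HL : 0 < L) by (rewrite HLam; apply sqrt_lt_R0; lra).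
  assert (HLL : L * L = L2) by (rewrite HLam; apply sqrt_sqrt; lra).
  assert (Hsinv : s * s = / d) by (field_simplify_eq; [nra | lra]).
  split; [|split].
  - intros Hdp.
    assert (Hsp : s < sqrt p).
    { assert (s * s < p) by (rewrite Hsinv; apply (Rmult_lt_reg_l d); [lra|]; field_simplify; lra).
      pose proof (sqrt_pos p). pose proof (sqrt_sqrt p ltac:(lra)). nra. }
    split.
    + exists (sqrt p). split. lra. rewrite C2 by lra.
      pose proof (sqrt_sqrt p ltac:(lra)).
      replace (p / sqrt p) with (sqrt p) by (field_simplify_eq; lra). ring.
    + intros l Hl. pose proof (C3 l Hl). pose proof (amgm p l Hp Hl). lra.
  - intros [Ht Hdp].
    assert (HsL : s * s <= L2).
    { rewrite Hsinv. apply (L2_le p k delta); auto. apply Rinv_0_lt_compat; lra.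
      fold A. rewrite Ethr in Ht.
      assert ((1 - d*p)*(1 + d*delta^2) - k*d*delta < 0).
      { assert (0 < d * delta^2 + 1) by nra.
        assert (1 - d*p < k * d * delta / (d * delta ^ 2 + 1)) by lra.
        apply (Rmult_lt_compat_r (d * delta^2 + 1)) in H0; auto.
        field_simplify in H0; lra. }
      assert (0 < d^2) by nra. nra. }
    assert (Hps : p <= s * s) by (rewrite Hsinv; apply (Rmult_le_reg_l d); [lra|]; field_simplify; lra).
    split.
    + exists s. split. lra. rewrite C2 by lra. unfold s. field. lra.
    + intros l Hl.
      replace (s + p * sqrt d) with (s + p / s) by (unfold s; field; lra).
      destruct (Rle_dec l s).
      * rewrite C1 by lra. pose proof (hf_decr p k delta Hp Hde l s ltac:(lra) HsL).
        unfold hf in *. lra.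
      * rewrite C2 by lra. pose proof (incr_part p s l ltac:(lra) Hps). lra.
  - intros Hdp.
    assert (HLs : L2 <= s * s).
    { rewrite Hsinv. apply (L2_ge p k delta); auto. apply Rinv_0_lt_compat; lra.
      fold A. rewrite Ethr in Hdp.
      assert (0 <= (1 - d*p)*(1 + d*delta^2) - k*d*delta).
      { assert (0 < d * delta^2 + 1) by nra.
        assert (k * d * delta / (d * delta ^ 2 + 1) <= 1 - d*p) by lra.
        apply (Rmult_le_compat_r (d * delta^2 + 1)) in H0; [|lra].
        field_simplify in H0; lra. }
      assert (0 < d^2) by nra.
      assert (0 <= ((/d)^2 - A * (/d) - p * delta^2) * d^2) by lra.
      apply (Rmult_le_reg_r (d^2)); auto. lra. }
    assert (HLs' : L <= s) by nra.
    assert (Hps : p <= s * s).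
    { rewrite Ethr in Hdp. assert (0 < k * d * delta / (d * delta ^ 2 + 1)).
      { apply Rdiv_lt_0_compat; [apply Rmult_lt_0_compat; [apply Rmult_lt_0_compat|]|]; try lra. pose proof (pow2_ge_0 delta). nra. }
      rewrite Hsinv; apply (Rmult_le_reg_l d); [lra|]; field_simplify; lra. }
    assert (Hmin : forall x, 0 < x -> hf p k delta L <= hf p k delta x).
    { intros x Hx. rewrite HLam. apply hf_min; auto. }
    split.
    + exists L. split. lra. rewrite C1 by lra. unfold hf, Rdiv. rewrite (Rmult_comm (/delta) L). reflexivity.
    + intros l Hl.
      replace (L + p / L - k * atan (L / delta)) with (hf p k delta L)
        by (unfold hf, Rdiv; rewrite (Rmult_comm L (/delta)); reflexivity).
      destruct (Rle_dec l s).
      * rewrite C1 by lra. apply Hmin; auto.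
      * rewrite C2 by lra. pose proof (incr_part p s l ltac:(lra) Hps).
        pose proof (Hmin s Hs). unfold hf in H0 at 2. lra.
Qed.
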